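(* The functor $\mathrm{Max}$ from the category of unital C*-algebras (with unital *-homomorphisms) to the category of unital involutive quantales (with unital involutive homomorphisms) does not preserve products.
   Context: A quantale is a complete lattice with an associative multiplication distributing over arbitrary joins in both variables; it is unital if it has a multiplicative unit; an involutive quantale has an involution $^*$ with $a^{**}=a$, $(a\cdot b)^*=b^*\cdot a^*$, $(\bigvee a_i)^*=\bigvee a_i^*$; morphisms preserve joins, multiplication, unit and involution. For a unital C*-algebra $A$, $\mathrm{Max}\,A$ is the quantale of all closed linear subspaces of $A$ with join $\bigvee_i M_i=\overline{\sum_i M_i}$, product $M\cdot N=$ closure of the linear span of $\{ab:a\in M,b\in N\}$, involution $M^*=\{a^*:a\in M\}$, and unit the subspace spanned by the identity. For a unital *-homomorphism $f:A\to B$, $\mathrm{Max}\,f(M)=\overline{f[M]}$. *)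

(* Defs.v *)
From HB Require Import structures.
From mathcomp Require Import all_boot all_order all_algebra.
From mathcomp Require Import reals.
From mathcomp Require Import complex.

Set Implicit Arguments.
Unset Strict Implicit.
Unset Printing Implicit Defensive.

Import Order.TTheory GRing.Theory Num.Theory.
Local Open Scope ring_scope.

(* Unital C*-algebras over the complex numbers C = R[i], R a real-number     *)
(* type.  The underlying complex vector space is a MathComp lmodType over    *)
(* R[i] (this allows the zero algebra); multiplication, unit, involution and  *)
(* norm are explicit fields together with the usual axioms.                  *)

Record cstar (R : realType) := CStar {
  cs_car :> lmodType R[i];
  cs_mul : cs_car -> cs_car -> cs_car;
  cs_one : cs_car;
  cs_star : cs_car -> cs_car;
  cs_norm : cs_car -> R;
  cs_mulA : forall x y z, cs_mul x (cs_mul y z) = cs_mul (cs_mul x y) z;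
  cs_mul1l : forall x, cs_mul cs_one x = x;
  cs_mul1r : forall x, cs_mul x cs_one = x;
  cs_mulDl : forall x y z, cs_mul (x + y) z = cs_mul x z + cs_mul y z;
  cs_mulDr : forall x y z, cs_mul x (y + z) = cs_mul x y + cs_mul x z;
  cs_scalerAl : forall (a : R[i]) x y, a *: cs_mul x y = cs_mul (a *: x) y;
  cs_scalerAr : forall (a : R[i]) x y, a *: cs_mul x y = cs_mul x (a *: y);
  cs_starK : forall x, cs_star (cs_star x) = x;
  cs_starD : forall x y, cs_star (x + y) = cs_star x + cs_star y;
  cs_starZ : forall (a : R[i]) x, cs_star (a *: x) = conjc a *: cs_star x;
  cs_starM : forall x y, cs_star (cs_mul x y) = cs_mul (cs_star y) (cs_star x);
  cs_norm_ge0 : forall x, 0 <= cs_norm x;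
  cs_norm_eq0 : forall x, cs_norm x = 0 -> x = 0;
  cs_normD : forall x y, cs_norm (x + y) <= cs_norm x + cs_norm y;
  cs_normZ : forall (a : R[i]) x, cs_norm (a *: x) = Normc.normc a * cs_norm x;
  cs_normM : forall x y, cs_norm (cs_mul x y) <= cs_norm x * cs_norm y;
  cs_cstar : forall x, cs_norm (cs_mul (cs_star x) x) = cs_norm x ^+ 2;
  cs_complete : forall u : nat -> cs_car,
    (forall e : R, 0 < e -> exists N : nat, forall m n : nat,
        (N <= m)%N -> (N <= n)%N -> cs_norm (u m - u n) < e) ->
    exists l : cs_car, forall e : R, 0 < e -> exists N : nat, forall n : nat,
        (N <= n)%N -> cs_norm (u n - l) < e
}.

Arguments cs_mul {R} c _ _.
Arguments cs_one {R} c.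
Arguments cs_star {R} c _.
Arguments cs_norm {R} c _.

Definition cstar_hom (R : realType) (A B : cstar R) (f : A -> B) : Prop :=
  [/\ forall x y, f (x + y) = f x + f y,
      forall (a : R[i]) x, f (a *: x) = a *: f x,
      forall x y, f (cs_mul A x y) = cs_mul B (f x) (f y),
      f (cs_one A) = cs_one B &
      forall x, f (cs_star A x) = cs_star B (f x)].

Definition is_cstar_product (R : realType) (I : Type) (A : I -> cstar R)
    (P : cstar R) (p : forall i, P -> A i) : Prop :=
  (forall i, cstar_hom (p i)) /\
  forall (B : cstar R) (f : forall i, B -> A i),
    (forall i, cstar_hom (f i)) ->
    exists! g : B -> P, cstar_hom g /\ forall i, p i \o g = f i.

Section MaxDef.
Variables (R : realType) (A : cstar R).

Definition closed_subspace (M : A -> Prop) : Prop :=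
  [/\ M 0,
      forall x y, M x -> M y -> M (x + y),
      forall (a : R[i]) x, M x -> M (a *: x) &
      forall x, (forall e : R, 0 < e -> exists2 m, M m & cs_norm A (x - m) < e)
                -> M x].

Definition clspan (S : A -> Prop) : A -> Prop :=
  fun x => forall M, closed_subspace M -> (forall y, S y -> M y) -> M x.

Lemma clspan_closed S : closed_subspace (clspan S).
Proof.
split.
- by move=> M [] ?.
- by move=> x y Hx Hy M HM HS; case: (HM) => _ HD _ _; apply: HD; [apply: Hx|apply: Hy].
- by move=> a x Hx M HM HS; case: (HM) => _ _ HZ _; apply: HZ; apply: Hx.
- move=> x Hx M HM HS; case: (HM) => _ _ _ HC; apply: HC => e /Hx [m Hm Hme].
  by exists m => //; apply: Hm.
Qed.

Definition Max := {M : A -> Prop | closed_subspace M}.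

Definition Max_gen (S : A -> Prop) : Max := exist _ (clspan S) (clspan_closed S).

Definition Max_le (M N : Max) : Prop := forall x, sval M x -> sval N x.

Definition Max_join (F : Max -> Prop) : Max :=
  Max_gen (fun x => exists2 M, F M & sval M x).

Definition Max_mul (M N : Max) : Max :=
  Max_gen (fun x => exists a b, [/\ sval M a, sval N b & x = cs_mul A a b]).

Definition Max_one : Max := Max_gen (fun x => x = cs_one A).

Definition Max_inv (M : Max) : Max :=
  Max_gen (fun x => exists2 a, sval M a & x = cs_star A a).

End MaxDef.

Definition Max_map (R : realType) (A B : cstar R) (f : A -> B) (M : Max A) : Max B :=
  Max_gen (fun y => exists2 x, sval M x & y = f x).

Record qops := QOps {
  q_car :> Type;
  q_le : q_car -> q_car -> Prop;
  q_join : (q_car -> Prop) -> q_car;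
  q_mul : q_car -> q_car -> q_car;
  q_one : q_car;
  q_inv : q_car -> q_car
}.

Definition q_image (Q Q' : Type) (h : Q -> Q') (S : Q -> Prop) : Q' -> Prop :=
  fun y => exists2 x, S x & y = h x.

Definition is_uiquantale (Q : qops) : Prop :=
  let le := @q_le Q in let join := @q_join Q in let mul := @q_mul Q in
  let one := @q_one Q in let inv := @q_inv Q in
  [/\ (forall x, le x x),
      (forall x y, le x y -> le y x -> x = y),
      (forall x y z, le x y -> le y z -> le x z),
      (forall S x, S x -> le x (join S)) &
      (forall S z, (forall x, S x -> le x z) -> le (join S) z)] /\
  [/\ (forall x y z, mul x (mul y z) = mul (mul x y) z),
      (forall a S, mul a (join S) = join (q_image (Q:=Q) (Q':=Q) (mul a) S)) &
      (forall a S, mul (join S) a = join (q_image (Q:=Q) (Q':=Q) (fun x => mul x a) S))] /\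
  (forall x, mul one x = x /\ mul x one = x) /\
  [/\ forall x, inv (inv x) = x,
      forall x y, inv (mul x y) = mul (inv y) (inv x) &
      forall S, inv (join S) = join (q_image (Q:=Q) (Q':=Q) inv S)].

Definition qhom (Q Q' : qops) (h : Q -> Q') : Prop :=
  [/\ forall S, h (q_join S) = q_join (q_image h S),
      forall x y, h (q_mul x y) = q_mul (h x) (h y),
      h (q_one Q) = q_one Q' &
      forall x, h (q_inv x) = q_inv (h x)].

Definition is_quantale_product (I : Type) (X : I -> qops) (P : qops)
    (p : forall i, P -> X i) : Prop :=
  (forall i, qhom (p i)) /\
  forall (Q : qops), is_uiquantale Q ->
  forall g : forall i, Q -> X i, (forall i, qhom (g i)) ->
    exists! h : Q -> P, qhom h /\ forall i, p i \o h = g i.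

Definition MaxQ (R : realType) (A : cstar R) : qops :=
  QOps (@Max_le R A) (@Max_join R A) (@Max_mul R A) (Max_one A) (@Max_inv R A).

Definition Max_preserves_products (R : realType) : Prop :=
  forall (I : Type) (A : I -> cstar R) (P : cstar R) (p : forall i, P -> A i),
    @is_cstar_product R I A P p ->
    @is_quantale_product I (fun i => MaxQ (A i)) (MaxQ P)
      (fun i => @Max_map R P (A i) (p i)).

(* Main.v *)
Require Import Defs.
From HB Require Import structures.
From mathcomp Require Import all_boot all_order all_algebra.
From mathcomp Require Import reals complex.
From mathcomp Require Import classical_sets lra.
From Stdlib Require Import Classical FunctionalExtensionality PropExtensionality ProofIrrelevance.

Set Implicit Arguments.
Unset Strict Implicit.
Unset Printing Implicit Defensive.
Import Order.TTheory GRing.Theory Num.Theory.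
Local Open Scope ring_scope.

Section RealComplete.
Variable R : realType.

Lemma real_complete (u : nat -> R) :
  (forall e : R, 0 < e -> exists N : nat, forall m n : nat,
        (N <= m)%N -> (N <= n)%N -> `|u m - u n| < e) ->
  exists l : R, forall e : R, 0 < e -> exists N : nat, forall n : nat,
        (N <= n)%N -> `|u n - l| < e.
Proof.
move=> Hc.
pose E : set R := fun x => exists N, forall n, (N <= n)%N -> x <= u n.
have [N1 HN1] := Hc 1 ltr01.
have ub : forall N, (forall m n, (N <= m)%N -> (N <= n)%N -> `|u m - u n| < 1)
   -> ubound E (u N + 1).
  move=> N HN x [N' HN'].
  have h1 := HN' (maxn N N') (leq_maxr _ _).
  have h2 := HN (maxn N N') N (leq_maxl _ _) (leqnn _).
  move: h2; rewrite ltr_norml => /andP[_ h2].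
  lra.
have hasub : has_ubound E by exists (u N1 + 1); exact: ub.
exists (sup E) => e e0.
have e20 : 0 < e / 2 by rewrite divr_gt0.
have [N HN] := Hc _ e20.
exists N => n Nn.
have inE : E (u N - e / 2).
  exists N => k Nk; have := HN N k (leqnn _) Nk; rewrite ltr_norml => /andP[_ h].
  lra.
have lo : u N - e / 2 <= sup E by exact: ub_le_sup.
have hi : sup E <= u N + e / 2.
  apply: ge_sup; first by exists (u N - e / 2).
  move=> x [N' HN'].
  have h1 := HN' (maxn N N') (leq_maxr _ _).
  have := HN (maxn N N') N (leq_maxl _ _) (leqnn _); rewrite ltr_norml => /andP[_ h2].
  lra.
have : `|u N - sup E| <= e / 2.
  rewrite ler_norml; apply/andP; split; lra.
move=> h3.
have h4 := HN n N Nn (leqnn _).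
have -> : u n - sup E = (u n - u N) + (u N - sup E) by rewrite addrA subrK.
move: h4; rewrite ltr_norml => /andP[h4 h5]. move: h3; rewrite ler_norml => /andP[h3 h6].
rewrite ltr_norml; apply/andP; split; lra.
Qed.
End RealComplete.


Section CC.
Variable R : realType.
Local Notation nc := (@Normc.normc R).

Lemma normc_ge0 (x : R[i]) : (0:R) <= nc x.
Proof. by case: x => a b; rewrite /= sqrtr_ge0. Qed.

Lemma normc_Re (x : R[i]) : `|complex.Re x| <= nc x.
Proof.
case: x => a b /=; rewrite -sqrtr_sqr; apply: ler_wsqrtr.
by rewrite lerDl sqr_ge0.
Qed.

Lemma normc_Im (x : R[i]) : `|complex.Im x| <= nc x.
Proof.
case: x => a b /=; rewrite -sqrtr_sqr; apply: ler_wsqrtr.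
by rewrite lerDr sqr_ge0.
Qed.

Lemma normc_le (x : R[i]) : nc x <= `|complex.Re x| + `|complex.Im x|.
Proof.
case: x => a b.
have -> : (a +i* b)%C = (a +i* 0)%C + (0 +i* b)%C by apply/eqP; rewrite eq_complex /= addr0 add0r !eqxx.
apply: (le_trans (le_normcD _ _)).
by rewrite /= expr0n /= addr0 add0r !sqrtr_sqr addr0 add0r.
Qed.

Lemma normc_conj (x : R[i]) : nc (conjc x) = nc x.
Proof. by case: x => a b /=; rewrite sqrrN. Qed.

Lemma CC_complete (u : nat -> R[i]) :
    (forall e : R, 0 < e -> exists N : nat, forall m n : nat,
        (N <= m)%N -> (N <= n)%N -> nc (u m - u n) < e) ->
    exists l : R[i], forall e : R, 0 < e -> exists N : nat, forall n : nat,
        (N <= n)%N -> nc (u n - l) < e.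
Proof.
move=> Hc.
have [la Hla] : exists la, forall e : R, 0 < e -> exists N : nat, forall n : nat,
        (N <= n)%N -> `|complex.Re (u n) - la| < e.
  apply: real_complete => e e0; have [N HN] := Hc e e0; exists N => m n hm hn.
  apply: le_lt_trans (HN m n hm hn); apply: le_trans (normc_Re _).
  by rewrite raddfB.
have [lb Hlb] : exists lb, forall e : R, 0 < e -> exists N : nat, forall n : nat,
        (N <= n)%N -> `|complex.Im (u n) - lb| < e.
  apply: real_complete => e e0; have [N HN] := Hc e e0; exists N => m n hm hn.
  apply: le_lt_trans (HN m n hm hn); apply: le_trans (normc_Im _).
  by rewrite raddfB.
exists (la +i* lb)%C => e e0.
have e20 : 0 < e / 2 by rewrite divr_gt0.
have [N1 H1] := Hla _ e20; have [N2 H2] := Hlb _ e20.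
exists (maxn N1 N2) => n hn.
have h1 := H1 n (leq_trans (leq_maxl _ _) hn).
have h2 := H2 n (leq_trans (leq_maxr _ _) hn).
apply: (le_lt_trans (normc_le _)).
have -> : complex.Re (u n - (la +i* lb)%C) = complex.Re (u n) - la by rewrite raddfB.
have -> : complex.Im (u n - (la +i* lb)%C) = complex.Im (u n) - lb by rewrite raddfB.
lra.
Qed.

Definition CC : cstar R.
refine (@CStar R (R[i]^o) (@GRing.mul R[i]) 1 (@conjc R) nc
  _ _ _ _ _ _ _ _ _ _ _ _ _ _ _ _ _ CC_complete).
- exact: mulrA.
- exact: mul1r.
- exact: mulr1.
- exact: mulrDl.
- exact: mulrDr.
- by move=> a x y; rewrite /= -!mulrA.
- by move=> a x y; rewrite /= mulrCA.
- exact: conjcK.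
- by move=> x y; rewrite /= rmorphD.
- by move=> a x; rewrite /= rmorphM.
- by move=> x y; rewrite /= rmorphM mulrC.
- exact: normc_ge0.
- exact: (@Normc.eq0_normc R).
- exact: le_normcD.
- by move=> a x; rewrite /= Normc.normcM.
- by move=> x y; rewrite Normc.normcM.
- by move=> x; rewrite /= Normc.normcM normc_conj expr2.
Defined.

End CC.


Section Prod.
Variable R : realType.
Variables A B : cstar R.

Definition mymax (x y : R) := if x <= y then y else x.
Definition pnorm (x : (A * B)%type) : R := mymax (cs_norm A x.1) (cs_norm B x.2).

Lemma mx1 (x y : R) : x <= mymax x y.
Proof. rewrite /mymax; case: ifP => // /negbT; rewrite -ltNge => h; lra. Qed.
Lemma mx2 (x y : R) : y <= mymax x y.
Proof. rewrite /mymax; case: ifP => // /negbT; rewrite -ltNge => h; lra. Qed.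
Lemma mxle (x y z : R) : x <= z -> y <= z -> mymax x y <= z.
Proof. by rewrite /mymax; case: ifP. Qed.
Lemma mxM (c x y : R) : 0 <= c -> mymax (c * x) (c * y) = c * mymax x y.
Proof.
move=> c0; have [->|cn] := eqVneq c 0; first by rewrite !mul0r /mymax; case: ifP.
have cp : 0 < c by rewrite lt_def cn c0.
by rewrite /mymax ler_pM2l //; case: ifP.
Qed.
Lemma mxlt (x y z : R) : x < z -> y < z -> mymax x y < z.
Proof. by rewrite /mymax; case: ifP. Qed.
Lemma mxsq (x y : R) : 0 <= x -> 0 <= y -> mymax (x ^+ 2) (y ^+ 2) = mymax x y ^+ 2.
Proof.
move=> x0 y0; rewrite /mymax; case: (leP x y) => h.
  by rewrite ler_pXn2r ?nnegrE // h.
case: ifP => // h2; apply/eqP; rewrite eq_le h2 /=.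
by rewrite ler_pXn2r ?nnegrE // ltW.
Qed.


Lemma PR_complete (u : nat -> (A * B)%type) :
    (forall e : R, 0 < e -> exists N : nat, forall m n : nat,
        (N <= m)%N -> (N <= n)%N -> pnorm (u m - u n) < e) ->
    exists l : (A * B)%type, forall e : R, 0 < e -> exists N : nat, forall n : nat,
        (N <= n)%N -> pnorm (u n - l) < e.
Proof.
move=> Hc.
have [l1 H1] := cs_complete (u := fun n => (u n).1)
  (fun e e0 => let: ex_intro N HN := Hc e e0 in
    ex_intro _ N (fun m n hm hn => le_lt_trans (mx1 _ _) (HN m n hm hn))).
have [l2 H2] := cs_complete (u := fun n => (u n).2)
  (fun e e0 => let: ex_intro N HN := Hc e e0 in
    ex_intro _ N (fun m n hm hn => le_lt_trans (mx2 _ _) (HN m n hm hn))).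
exists (l1, l2) => e e0.
have [N1 HN1] := H1 e e0; have [N2 HN2] := H2 e e0.
exists (maxn N1 N2) => n hn.
rewrite /pnorm; apply: mxlt.
  exact: HN1 (leq_trans (leq_maxl _ _) hn).
exact: HN2 (leq_trans (leq_maxr _ _) hn).
Qed.

Definition PR : cstar R.
refine (@CStar R (A * B)%type
  (fun x y => (cs_mul A x.1 y.1, cs_mul B x.2 y.2))
  (cs_one A, cs_one B)
  (fun x => (cs_star A x.1, cs_star B x.2)) pnorm
  _ _ _ _ _ _ _ _ _ _ _ _ _ _ _ _ _ PR_complete).
- by move=> x y z; rewrite /= !cs_mulA.
- by move=> [x1 x2]; rewrite /= !cs_mul1l.
- by move=> [x1 x2]; rewrite /= !cs_mul1r.
- by move=> x y z; rewrite /= !cs_mulDl.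
- by move=> x y z; rewrite /= !cs_mulDr.
- by move=> a x y; rewrite /= -!cs_scalerAl.
- by move=> a x y; rewrite /= -!cs_scalerAr.
- by move=> [x1 x2]; rewrite /= !cs_starK.
- by move=> x y; rewrite /= !cs_starD.
- by move=> a x; rewrite /= !cs_starZ.
- by move=> x y; rewrite /= !cs_starM.
- by move=> x; apply: le_trans (mx1 _ _); apply: cs_norm_ge0.
- move=> [x1 x2] h; rewrite /pnorm /= in h.
  have a1 := cs_norm_ge0 x1; have a2 := cs_norm_ge0 x2.
  have b1 := mx1 (cs_norm A x1) (cs_norm B x2).
  have b2 := mx2 (cs_norm A x1) (cs_norm B x2).
  rewrite h in b1 b2.
  rewrite (@cs_norm_eq0 _ A x1); last by apply/eqP; rewrite eq_le a1 b1.
  by rewrite (@cs_norm_eq0 _ B x2) //; apply/eqP; rewrite eq_le a2 b2.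
- move=> x y; rewrite /pnorm; apply: mxle.
    apply: le_trans (cs_normD _ _) _; apply: lerD; [exact: mx1|exact: mx1].
  apply: le_trans (cs_normD _ _) _; apply: lerD; [exact: mx2|exact: mx2].
- move=> a x; rewrite /pnorm /= !cs_normZ mxM //.
  by case: a => p q; rewrite /= sqrtr_ge0.
- move=> x y; rewrite /pnorm /=; apply: mxle.
    apply: le_trans (cs_normM _ _) _; apply: ler_pM; rewrite ?cs_norm_ge0 ?mx1 //.
  apply: le_trans (cs_normM _ _) _; apply: ler_pM; rewrite ?cs_norm_ge0 ?mx2 //.
- move=> [x1 x2]; rewrite /pnorm /= !cs_cstar mxsq //; exact: cs_norm_ge0.
Defined.

End Prod.


Section MaxLemmas.
Variable R : realType.
Variable A : cstar R.

Lemma small0 (t : R) : 0 <= t -> (forall e : R, 0 < e -> t < e) -> t = 0.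
Proof.
move=> t0 h; apply/eqP; rewrite eq_le t0 andbT; rewrite leNgt; apply/negP => tp.
by have := h t tp; rewrite ltxx.
Qed.

Lemma Max_ext (M N : Max A) : (forall z, sval M z <-> sval N z) -> M = N.
Proof.
case: M => M hM; case: N => N hN /= H.
have E : M = N by apply: functional_extensionality => z; apply: propositional_extensionality.
subst N; congr exist; exact: proof_irrelevance.
Qed.

Lemma clspan_sub (S : A -> Prop) x : S x -> clspan S x.
Proof. by move=> Sx M _ HS; apply: HS. Qed.

Lemma clspan_0 (S : A -> Prop) : clspan S 0.
Proof. by case: (clspan_closed S). Qed.

Lemma zero_closed : closed_subspace (fun x : A => x = 0).
Proof.
split => //.
- by move=> x y -> ->; rewrite addr0.
- by move=> a x ->; rewrite scaler0.
- move=> x h; apply: cs_norm_eq0; apply: small0; first exact: cs_norm_ge0.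
  by move=> e e0; have [m -> hm] := h e e0; rewrite subr0 in hm.
Qed.

Lemma clspan_zero (S : A -> Prop) x : (forall y, S y -> y = 0) -> clspan S x -> x = 0.
Proof. by move=> hS h; apply: (h (fun x : A => x = 0) zero_closed). Qed.

End MaxLemmas.


Definition PP := (Prop * Prop)%type.
Definition PQ : qops :=
  @QOps PP (fun x y => (x.1 -> y.1) /\ (x.2 -> y.2))
    (fun S => (exists x, S x /\ x.1, exists x, S x /\ x.2))
    (fun x y => (x.1 /\ y.1, x.2 /\ y.2)) (True, True) (fun x => x).

Lemma pairP (x y : PP) : (x.1 <-> y.1) -> (x.2 <-> y.2) -> x = y.
Proof.
case: x => a b; case: y => c d /= h1 h2.
by rewrite (propositional_extensionality _ _ h1) (propositional_extensionality _ _ h2).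
Qed.

Lemma PQ_ok : is_uiquantale PQ.
Proof.
split; [|split; [|split]].
- split.
  + by [].
  + by move=> x y [h1 h2] [h3 h4]; apply: pairP.
  + by move=> x y z [h1 h2] [h3 h4]; split => ?; auto.
  + by move=> S x Sx; split => h; exists x.
  + by move=> S z h; split => -[x [Sx hx]]; case: (h x Sx) => h1 h2; auto.
- split.
  + by move=> x y z; apply: pairP => /=; tauto.
  + move=> a S; apply: pairP => /=; split.
    * by case=> ha [x [Sx hx]]; exists (a.1 /\ x.1, a.2 /\ x.2); split => //; exists x.
    * by case=> y [[x Sx ->] /= [h1 h2]]; split => //; exists x.
    * by case=> ha [x [Sx hx]]; exists (a.1 /\ x.1, a.2 /\ x.2); split => //; exists x.
    * by case=> y [[x Sx ->] /= [h1 h2]]; split => //; exists x.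
  + move=> a S; apply: pairP => /=; split.
    * by case=> [[x [Sx hx]] ha]; exists (x.1 /\ a.1, x.2 /\ a.2); split => //; exists x.
    * by case=> y [[x Sx ->] /= [h1 h2]]; split => //; exists x.
    * by case=> [[x [Sx hx]] ha]; exists (x.1 /\ a.1, x.2 /\ a.2); split => //; exists x.
    * by case=> y [[x Sx ->] /= [h1 h2]]; split => //; exists x.
- by move=> x; split; apply: pairP => /=; tauto.
- split.
  + by [].
  + by move=> x y; apply: pairP => /=; tauto.
  + move=> S; apply: pairP => /=; split.
    * by case=> x [Sx hx]; exists x; split => //; exists x.
    * by case=> y [[x Sx ->] hx]; exists x.
    * by case=> x [Sx hx]; exists x; split => //; exists x.
    * by case=> y [[x Sx ->] hx]; exists x.
Qed.


Section G.
Variable R : realType.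
Local Notation C := (CC R).

Definition gP (P : Prop) : Max C := @Max_gen R C (fun _ => P).

Lemma gPE P (z : C) : sval (gP P) z <-> P \/ z = 0.
Proof.
split.
- move=> h; case: (classic P) => hP; [by left|right].
  by apply: (clspan_zero (S := fun _ => P)) h => y.
- case=> [hP|->]; [exact: clspan_sub|exact: clspan_0].
Qed.

Variable Q : qops.
Variable pr : Q -> Prop.
Hypothesis hj : forall S, pr (q_join S) <-> exists x, S x /\ pr x.
Hypothesis hm : forall x y, pr (q_mul x y) <-> pr x /\ pr y.
Hypothesis ho : pr (q_one Q).
Hypothesis hi : forall x, pr (q_inv x) <-> pr x.

Lemma g_qhom : qhom (Q := Q) (Q' := MaxQ C) (fun x => gP (pr x)).
Proof.
split.
- move=> S; apply: Max_ext => z; rewrite gPE hj /=; split.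
  + case=> [[x [Sx px]]|->]; last exact: clspan_0.
    apply: clspan_sub; exists (gP (pr x)); first by exists x.
    by apply/gPE; left.
  + move=> h; case: (classic (exists x, S x /\ pr x)) => hc; [by left|right].
    apply: clspan_zero h => y [M [x Sx ->]] /gPE [px|//].
    by case: hc; exists x.
- move=> x y; apply: Max_ext => z; rewrite gPE hm /=; split.
  + case=> [[px py]|->]; last exact: clspan_0.
    apply: clspan_sub; exists z, 1; split; [by apply/gPE; left|by apply/gPE; left|].
    by rewrite /= mulr1.
  + move=> h; case: (classic (pr x /\ pr y)) => hc; [by left|right].
    apply: clspan_zero h => w [a [b [/gPE ha /gPE hb ->]]].
    case: ha => [pa|->]; last by rewrite /= mul0r.
    case: hb => [pb|->]; last by rewrite /= mulr0.
    by case: hc.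
- apply: Max_ext => z; rewrite gPE /=; split.
  + move=> _.
    have h1 : clspan (fun x : C => x = cs_one C) 1 by exact: clspan_sub.
    have := (let: And4 _ _ hZ _ := clspan_closed (fun x : C => x = cs_one C) in hZ) z _ h1.
    by rewrite (_ : z *: _ = z) //; exact: mulr1.
  + by move=> _; left.
- move=> x; apply: Max_ext => z; rewrite gPE hi /=; split.
  + case=> [px|->]; last exact: clspan_0.
    apply: clspan_sub; exists (conjc z); [by apply/gPE; left|by rewrite /= conjcK].
  + move=> h; case: (classic (pr x)) => hc; [by left|right].
    apply: clspan_zero h => w [a /gPE [pa|->] ->]; first by case: hc.
    exact: (@conjc0 R).
Qed.

End G.


Section Final.
Variable R : realType.
Local Notation C := (CC R).
Definition P2 : cstar R := PR C C.
Definition p2 : forall i : bool, P2 -> C :=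
  fun b => if b then (fun x : P2 => x.1) else (fun x : P2 => x.2).

Lemma p2_prod : @is_cstar_product R bool (fun _ : bool => C) P2 p2.
Proof.
split.
- by case; split.
- move=> B f hf.
  exists (fun b : B => ((f true b, f false b) : P2)); split.
  + split.
    * case: (hf true) => h1 h2 h3 h4 h5; case: (hf false) => k1 k2 k3 k4 k5.
      split => [x y|a x|x y||x] /=.
      - by rewrite h1 k1.
      - by rewrite h2 k2.
      - by rewrite h3 k3.
      - by rewrite h4 k4.
      - by rewrite h5 k5.
    * by case.
  + move=> g' [_ hg']; apply: functional_extensionality => b.
    have E1 := hg' true; have E2 := hg' false.
    rewrite -E1 -E2 /=; by case: (g' b).
Qed.

Definition prb (b : bool) (x : PQ) : Prop := if b then x.1 else x.2.

Lemma g_ok b : qhom (Q := PQ) (Q' := MaxQ C) (fun x => gP R (prb b x)).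
Proof. by apply: g_qhom; case: b. Qed.

Lemma main : ~ Max_preserves_products R.
Proof.
move=> H.
have [_ Hu] := H bool (fun _ => C) P2 p2 p2_prod.
have [h [[Hh Hp] _]] := Hu PQ PQ_ok (fun b x => gP R (prb b x)) g_ok.
case: Hh => hjoin _ hone _.
pose e : PQ := (True, False).
pose S : PQ -> Prop := fun x => x = e \/ x = q_one PQ.
have JS : q_join S = q_one PQ.
  apply: pairP => /=; split => //; move=> _; exists (True, True); split => //; by right.
have sub : forall z, sval (h e) z -> z.1 = z.2.
  move=> z hz.
  have : sval (h (q_one PQ)) z.
    rewrite -JS hjoin /=; apply: clspan_sub; exists (h e) => //; exists e => //; by left.
  rewrite hone /=.
  move=> hc; apply: (hc (fun w : P2 => w.1 = w.2)); last by move=> y ->.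
  split => //.
  + by move=> x y /= -> ->.
  + by move=> a x /= ->.
  + move=> x hx; apply/eqP; rewrite -subr_eq0; apply/eqP.
    apply: (@Normc.eq0_normc R); apply: small0; first exact: normc_ge0.
    move=> eps eps0.
    have eps20 : 0 < eps / 2 by rewrite divr_gt0.
    have [m hm hlt] := hx _ eps20.
    have l1 := mx1 (Normc.normc (x.1 - m.1)) (Normc.normc (x.2 - m.2)).
    have l2 := mx2 (Normc.normc (x.1 - m.1)) (Normc.normc (x.2 - m.2)).
    have E : x.1 - x.2 = (x.1 - m.1) - (x.2 - m.2) by rewrite hm; rewrite opprB addrA subrK.
    rewrite E; apply: le_lt_trans (le_normcD _ _) _; rewrite normcN.
    rewrite /= /pnorm /= in hlt; lra.
have snd0 : forall z, sval (h e) z -> z.2 = 0.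
  move=> z hz.
  have : sval (Max_map (p2 false) (h e)) z.2 by apply: clspan_sub; exists z.
  have E := congr1 (fun F => F e) (Hp false); rewrite /= in E; rewrite E.
  by move/gPE => [].
have : sval (Max_map (p2 true) (h e)) 1.
  have E := congr1 (fun F => F e) (Hp true); rewrite /= in E; rewrite E.
  by apply/gPE; left.
move/(clspan_zero (A := C)) => h1.
have h2 : (1 : R[i]) = 0.
  apply: h1 => y [z hz ->] /=; rewrite (sub z hz); exact: snd0.
by move/eqP: h2; rewrite oner_eq0.
Qed.
End Final.


Theorem theorem5p2 (R : realType) : ~ Max_preserves_products R.
Proof. exact: main. Qed.
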